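(* Let $f:\mathbb{R}^n\to\mathbb{R}\cup\{+\infty\}$ be a proper, closed (lower semicontinuous), convex function, let $C_1,\dots,C_m\subseteq\mathbb{R}^n$ be nonempty closed convex sets, and let $\rho>0$. Define the penalized loss $$h_\rho(\mathbf{x}) = f(\mathbf{x})+\frac{\rho}{2m}\sum_{i=1}^m \operatorname{dist}(\mathbf{x},C_i)^2,$$ and assume $h_\rho$ is coercive. Starting from any $\mathbf{x}_0\in\mathbb{R}^n$, define the proximal distance iterates $$\mathbf{y}_k=\frac{1}{m}\sum_{i=1}^m P_{C_i}(\mathbf{x}_k),\qquad \mathbf{x}_{k+1}=\operatorname{prox}_{\rho^{-1}f}(\mathbf{y}_k).$$ Then a point is a fixed point of the algorithm map $\mathbf{x}\mapsto \operatorname{prox}_{\rho^{-1}f}\big(\frac{1}{m}\sum_{i=1}^m P_{C_i}(\mathbf{x})\big)$ if and only if it minimizes $h_\rho$, such fixed points exist, and the sequence $(\mathbf{x}_k)$ converges to a minimizer of $h_\rho$.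
   Context: For a function $g$, $\operatorname{prox}_g(\mathbf{y})=\operatorname{argmin}_{\mathbf{x}}\big[g(\mathbf{x})+\frac12\|\mathbf{x}-\mathbf{y}\|^2\big]$, with $\|\cdot\|$ the Euclidean norm. $P_{C}(\mathbf{x})$ denotes the Euclidean projection of $\mathbf{x}$ onto the closed convex set $C$, and $\operatorname{dist}(\mathbf{x},C)=\|\mathbf{x}-P_C(\mathbf{x})\|$. *)

(* Defs.v *)
From HB Require Import structures.
From mathcomp Require Import all_boot all_order all_algebra.
From mathcomp Require Import all_classical all_reals all_analysis.
Set Implicit Arguments. Unset Strict Implicit. Unset Printing Implicit Defensive.
Import Order.TTheory GRing.Theory Num.Theory.
Import numFieldNormedType.Exports.
Local Open Scope classical_set_scope.
Local Open Scope ring_scope.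

Section Defs.
Variables (R : realType) (n : nat).
Local Notation vec := 'rV[R]_n.

Definition enorm (x : vec) : R := Num.sqrt (\sum_(j < n) x ord0 j ^+ 2).

Definition convex_set_Rn (C : set vec) : Prop :=
  forall (x y : vec) (t : R), C x -> C y -> 0 <= t -> t <= 1 ->
    C (t *: x + (1 - t) *: y).

Definition convex_fun_Rn (f : vec -> \bar R) : Prop :=
  forall (x y : vec) (t : R), 0 < t -> t < 1 ->
    (f (t *: x + (1 - t) *: y)%R <= t%:E * f x + (1 - t)%:E * f y)%E.

Definition proper_fun (f : vec -> \bar R) : Prop :=
  (forall x, f x != -oo%E) /\ (exists x, f x \is a fin_num).

Definition closed_fun (f : vec -> \bar R) : Prop := lower_semicontinuous f.

Definition coercive (h : vec -> \bar R) : Prop :=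
  forall M : R, exists r : R, forall x, r <= enorm x -> (M%:E <= h x)%E.

Definition is_proj (C : set vec) (x p : vec) : Prop :=
  C p /\ forall q, C q -> enorm (x - p) <= enorm (x - q).
Definition proj (C : set vec) (x : vec) : vec := xget 0 [set p | is_proj C x p].

Definition dist (x : vec) (C : set vec) : R := enorm (x - proj C x).

Definition is_prox (g : vec -> \bar R) (y p : vec) : Prop :=
  forall q, (g p + (2^-1 * enorm (p - y) ^+ 2)%:E
             <= g q + (2^-1 * enorm (q - y) ^+ 2)%:E)%E.
Definition prox (g : vec -> \bar R) (y : vec) : vec := xget 0 [set p | is_prox g y p].

Definition h_rho (m : nat) (f : vec -> \bar R) (C : 'I_m -> set vec) (rho : R)
  (x : vec) : \bar R :=
  (f x + (rho / (2 * m%:R) * \sum_(i < m) dist x (C i) ^+ 2)%:E)%E.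

Definition pd_map (m : nat) (f : vec -> \bar R) (C : 'I_m -> set vec) (rho : R)
  (x : vec) : vec :=
  prox (fun z => (rho^-1)%:E * f z)%E
       ((m%:R)^-1 *: \sum_(i < m) proj (C i) x).

Definition is_minimizer (h : vec -> \bar R) (x : vec) : Prop :=
  forall z, (h x <= h z)%E.

End Defs.

(* Main.v *)
Require Import Defs.
From HB Require Import structures.
From mathcomp Require Import all_boot all_order all_algebra.
From mathcomp Require Import all_classical all_reals all_analysis.
From mathcomp Require Import ring lra.
Import Order.TTheory GRing.Theory Num.Theory.
Import numFieldNormedType.Exports.
Set Implicit Arguments. Unset Strict Implicit. Unset Printing Implicit Defensive.
Local Open Scope classical_set_scope.
Local Open Scope ring_scope.

Section Vec.
Variables (R : realType) (n : nat).
Local Notation vec := 'rV[R]_n.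
Local Notation proj := (@Defs.proj R n).

Definition dot (x y : vec) : R := \sum_(j < n) x ord0 j * y ord0 j.
Definition sq (x : vec) : R := dot x x.

Lemma dotC x y : dot x y = dot y x.
Proof. by apply: eq_bigr => j _; rewrite mulrC. Qed.

Lemma dotDl x y z : dot (x + y) z = dot x z + dot y z.
Proof. by rewrite /dot -big_split; apply: eq_bigr => j _; rewrite mxE mulrDl. Qed.

Lemma dotNl x y : dot (- x) y = - dot x y.
Proof. by rewrite /dot -sumrN; apply: eq_bigr => j _; rewrite mxE mulNr. Qed.

Lemma dotZl a x y : dot (a *: x) y = a * dot x y.
Proof. by rewrite /dot mulr_sumr; apply: eq_bigr => j _; rewrite mxE mulrA. Qed.

Lemma dotBl x y z : dot (x - y) z = dot x z - dot y z.
Proof. by rewrite dotDl dotNl. Qed.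

Lemma dotDr x y z : dot z (x + y) = dot z x + dot z y.
Proof. by rewrite dotC dotDl !(dotC z). Qed.
Lemma dotNr x y : dot y (- x) = - dot y x.
Proof. by rewrite dotC dotNl dotC. Qed.
Lemma dotBr x y z : dot z (x - y) = dot z x - dot z y.
Proof. by rewrite dotDr dotNr. Qed.
Lemma dotZr a x y : dot y (a *: x) = a * dot y x.
Proof. by rewrite dotC dotZl dotC. Qed.
Lemma dot0l x : dot 0 x = 0.
Proof. by rewrite /dot big1 // => j _; rewrite mxE mul0r. Qed.
Lemma dot0r x : dot x 0 = 0.
Proof. by rewrite dotC dot0l. Qed.

Lemma dot_suml m (u : 'I_m -> vec) v :
  dot (\sum_(i < m) u i) v = \sum_(i < m) dot (u i) v.
Proof.
rewrite /dot exchange_big /=; apply: eq_bigr => j _.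
by rewrite summxE mulr_suml.
Qed.

Lemma sq_ge0 x : 0 <= sq x.
Proof. by apply: sumr_ge0 => j _; rewrite -expr2 sqr_ge0. Qed.

Lemma sq_eq0 x : sq x = 0 -> x = 0.
Proof.
move=> h; apply/rowP => j; rewrite mxE.
have h2 : \sum_(i < n | true) x ord0 i ^+ 2 = 0.
  by rewrite -[RHS]h /sq /dot; apply: eq_bigr => i _; rewrite expr2.
have := psumr_eq0P (fun j _ => sqr_ge0 (x ord0 j)) h2 isT (i := j).
by move=> /eqP; rewrite sqrf_eq0 => /eqP.
Qed.

Lemma sqD x y : sq (x + y) = sq x + 2 * dot x y + sq y.
Proof. rewrite /sq !dotDl !dotDr (dotC y x); ring. Qed.

Lemma sqB x y : sq (x - y) = sq x - 2 * dot x y + sq y.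
Proof. rewrite /sq !dotDl !dotDr !dotNl !dotNr (dotC y x); ring. Qed.

Lemma sqN x : sq (- x) = sq x.
Proof. by rewrite /sq dotNl dotNr opprK. Qed.

Lemma sqZ a x : sq (a *: x) = a ^+ 2 * sq x.
Proof. rewrite /sq dotZl dotZr; ring. Qed.

Lemma dot_le x y : 2 * dot x y <= sq x + sq y.
Proof. have := sq_ge0 (x - y); rewrite sqB; lra. Qed.

Lemma dot_le' x y : - (2 * dot x y) <= sq x + sq y.
Proof. have := sq_ge0 (x + y); rewrite sqD; lra. Qed.

Lemma sqD_le x y : sq (x + y) <= 2 * sq x + 2 * sq y.
Proof. have := dot_le x y; rewrite sqD; lra. Qed.

Lemma enorm_sq (x : vec) : enorm x ^+ 2 = sq x.
Proof.
rewrite /enorm sqr_sqrtr; last exact: sq_ge0.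
by apply: eq_bigr => j _; rewrite expr2.
Qed.

Lemma enorm_ge0 (x : vec) : 0 <= enorm x.
Proof. exact: sqrtr_ge0. Qed.

Lemma enorm_le (x y : vec) : (enorm x <= enorm y) = (sq x <= sq y).
Proof. by rewrite -!enorm_sq ler_pXn2r // nnegrE enorm_ge0. Qed.

Lemma coord_le (x : vec) j : `|x ord0 j| <= `|x|.
Proof.
have /mapP[k Hk ->] : `|x ord0 j| \in [seq `|x i.1 i.2| | i : 'I_1 * 'I_n].
  by apply/mapP; exists (ord0, j) => //=; rewrite mem_enum.
have -> : `|x| = mx_norm x by [].
by rewrite mx_normrE; apply/bigmax_geP; right => /=; exists k.
Qed.

Lemma norm_le_coord (x : vec) M : 0 <= M -> (forall j, `|x ord0 j| <= M) -> `|x| <= M.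
Proof.
move=> M0 h; have -> : `|x| = mx_norm x by [].
rewrite mx_normrE; apply/bigmax_leP; split => //.
by move=> [i j] _ /=; rewrite (ord1 i); exact: h.
Qed.

Lemma normsq_le (x : vec) : `|x| ^+ 2 <= sq x.
Proof.
have [->|] := eqVneq x 0.
  by rewrite normr0 expr0n /= sq_ge0.
move=> x0.
have /mx_norm_neq0 [[i j] hij] : mx_norm x != 0.
  by apply: contra x0 => /eqP /mx_norm_eq0 ->.
have -> : `|x| = mx_norm x by [].
rewrite hij /= (ord1 i) real_normK ?num_real //.
rewrite /sq /dot (bigD1 j) //= -expr2 lerDl sumr_ge0 // => k _.
by rewrite -expr2 sqr_ge0.
Qed.

Lemma abs_dot (x y : vec) : `|dot x y| <= n%:R * (`|x| * `|y|).
Proof.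
rewrite /dot; apply: le_trans (ler_norm_sum _ _ _) _.
rewrite -[n in n%:R]card_ord -sum1_card natr_sum mulr_suml.
apply: ler_sum => j _; rewrite mul1r normrM.
by apply: ler_pM => //; exact: coord_le.
Qed.

Lemma sq_le_norm (x : vec) : sq x <= n%:R * `|x| ^+ 2.
Proof.
have := abs_dot x x; rewrite -expr2; apply: le_trans.
by rewrite real_ler_norm // num_real.
Qed.

Lemma norm_le_enorm (x : vec) : `|x| <= enorm x.
Proof.
rewrite -(ler_pXn2r (n:=2)) // ?nnegrE ?enorm_ge0 //.
by rewrite enorm_sq normsq_le.
Qed.


Lemma nbhs_norm_lt (p : vec) (d : R) (P : vec -> Prop) : 0 < d ->
  (forall y, `|y - p| < d -> P y) -> nbhs p P.
Proof.
move=> d0 h; apply: filterS (nbhs_ball_norm p (PosNum d0)) => y /=.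
by rewrite -normrN opprB => /h.
Qed.

Lemma ebetween (c : R) (u : \bar R) : (c%:E < u)%E -> exists b, c < b /\ (b%:E < u)%E.
Proof.
case: u => [v| |] //=.
- rewrite lte_fin => cv; exists ((c + v) / 2); rewrite lte_fin; split; lra.
- by move=> _; exists (c + 1); rewrite ltey; split => //; lra.
Qed.

Lemma ebetween2 (u w : \bar R) : (u < w)%E -> exists a : R, (u <= a%:E)%E /\ (a%:E < w)%E.
Proof.
case: u => [v| |]; case: w => [z| |] //=.
- by move=> h; exists v; split.
- by move=> _; exists v; rewrite ltey; split.
- by move=> _; exists (z - 1); rewrite lte_fin leNye; split => //; lra.
- by move=> _; exists 0; rewrite ltey leNye.
Qed.

Arguments ebetween {c u}.
Arguments ebetween2 {u w}.

Lemma lsc_add (f : vec -> \bar R) (G : vec -> R) : lower_semicontinuous f ->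
  (forall x, exists L, forall y, G x - L * `|y - x| <= G y) ->
  lower_semicontinuous (fun x => f x + (G x)%:E)%E.
Proof.
move=> lf hG x a hax.
have hfx : ((a - G x)%:E < f x)%E.
  move: hax; case: (f x) => [v| |] /= h; rewrite ?ltey //; move: h;
    rewrite ?addNye // -?EFinD !lte_fin; lra.
have [b [hb1 hb2]] := ebetween hfx.
have [V Vx HV] := lf x b hb2.
have [L HL] := hG x.
pose e := b - (a - G x).
have e0 : 0 < e by rewrite /e; lra.
have d0 : 0 < e / (`|L| + 1) by apply: divr_gt0 => //; rewrite ltr_wpDl.
have W : nbhs x (fun y => `|y - x| < e / (`|L| + 1)) by exact: nbhs_norm_lt d0 _.
exists (V `&` (fun y => `|y - x| < e / (`|L| + 1))); first exact: filterI.
move=> y [Vy hy].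
have hGy : a - b < G y.
  apply: lt_le_trans (HL y); rewrite /e in hy.
  have h1 : L * `|y - x| <= `|L| * `|y - x| by rewrite ler_wpM2r // real_ler_norm // num_real.
  have h2 : `|L| * `|y - x| < b - (a - G x).
    have L0 : 0 < `|L| + 1 by rewrite ltr_wpDl.
    rewrite ltr_pdivlMr // in hy.
    have : `|L| * `|y - x| <= `|y - x| * (`|L| + 1).
      by rewrite mulrDr mulr1 mulrC lerDl.
    lra.
  lra.
have := lteD (HV y Vy) (_ : ((a - b)%:E < (G y)%:E)%E).
by rewrite -EFinD (_ : b + (a - b) = a) //; [apply; rewrite lte_fin | ring].
Qed.

Definition ind (C : set vec) (z : vec) : \bar R := if pselect (C z) then 0%E else +oo%E.

Lemma ind_ge0 C z : (0 <= ind C z)%E.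
Proof. by rewrite /ind; case: pselect. Qed.

Lemma lsc_ind (C : set vec) : closed C -> lower_semicontinuous (ind C).
Proof.
move=> cC x a; rewrite /ind; case: pselect => Cx h.
  exists setT; first exact: filterT.
  by move=> y _; apply: lt_le_trans h _; exact: ind_ge0.
exists (~` C); first by apply: open_nbhs_nbhs; split => //; exact: closed_openC.
by move=> y Cy; case: pselect.
Qed.

Lemma min_compact (K : set vec) (phi : vec -> \bar R) x0 :
  compact K -> K x0 -> lower_semicontinuous phi ->
  exists2 p, K p & forall z, K z -> (phi p <= phi z)%E.
Proof.
move=> cK Kx0 lphi.
pose D z := [set w | K w /\ (phi w <= phi z)%E].
have FF : ProperFilter (filter_from K D).
  apply: filter_from_proper; last by move=> z Kz; exists z.
  apply: filter_from_filter; first by exists x0.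
  move=> z z' Kz Kz'; case: (leP (phi z) (phi z')) => h.
    by exists z => // w [Kw hw]; split; split => //; exact: le_trans hw h.
  by exists z' => // w [Kw hw]; split; split => //; exact: le_trans hw (ltW h).
have FK : filter_from K D K by exists x0 => // w [].
have [p [Kp clp]] := cK _ FF FK.
exists p => // z Kz; rewrite leNgt; apply/negP => hz.
have [a [ha1 ha2]] := ebetween2 hz.
have [V Vp HV] := lphi p a ha2.
have FDz : filter_from K D (D z) by exists z.
have [w [[Kw hw] Vw]] := clp (D z) V FDz Vp.
have := HV w Vw; rewrite ltNge => /negP; apply.
exact: le_trans hw ha1.
Qed.

Arguments min_compact {K phi x0}.

Lemma exists_min (phi : vec -> \bar R) :
  lower_semicontinuous phi -> coercive phi -> exists p, forall z, (phi p <= phi z)%E.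
Proof.
move=> lphi cphi.
case: (pselect (exists x, (phi x < +oo)%E)) => [[x0 hx0]|hno]; last first.
  have e z : phi z = +oo%E.
    by apply/eqP; rewrite eq_le leey /= leNgt; apply/negP => h; apply: hno; exists z.
  by exists 0 => z; rewrite !e.
have [M hM] : exists M : R, (phi x0 < M%:E)%E.
  case E: (phi x0) => [v| |].
  - by exists (v + 1); rewrite lte_fin; lra.
  - by rewrite E in hx0.
  - by exists 0; rewrite ltNye.
have [r hr] := cphi M.
pose rr := `|r| + `|x0|.
pose K := closed_ball_ (fun x : vec => `|x|) 0 rr.
have Kx0 : K x0 by rewrite /K /closed_ball_ /= sub0r normrN lerDr.
have cK : compact K.
  apply: bounded_closed_compact; last exact: closed_closed_ball_.
  exists rr; split; first exact: num_real.
  move=> M' hM' z; rewrite /K /closed_ball_ /= sub0r normrN => hz.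
  exact: le_trans hz (ltW hM').
have [p Kp hp] := min_compact cK Kx0 lphi.
exists p => z.
case: (pselect (K z)) => Kz; first exact: hp.
have : (M%:E <= phi z)%E.
  apply: hr; apply: le_trans (norm_le_enorm z).
  move: Kz; rewrite /K /closed_ball_ /= sub0r normrN => /negP; rewrite -ltNge.
  move=> h; apply: le_trans (ltW h); rewrite /rr.
  by apply: le_trans (ler_norm r) _; rewrite lerDl.
move=> h; apply: le_trans h; apply: le_trans (ltW hM).
exact: hp.
Qed.

Lemma coercive_sq (phi : vec -> \bar R) :
  (forall M, exists s, forall z, s <= sq z -> (M%:E <= phi z)%E) -> coercive phi.
Proof.
move=> h M; have [s hs] := h M.
exists (1 + `|s|) => z hz; apply: hs.
have z0 : 0 <= 1 + `|s| by rewrite addr_ge0.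
rewrite -enorm_sq.
have : (1 + `|s|) ^+ 2 <= enorm z ^+ 2 by rewrite ler_pXn2r // nnegrE enorm_ge0.
apply: le_trans.
have : s <= `|s| := ler_norm s.
have := normr_ge0 s.
move=> h1 h2; rewrite expr2; nra.
Qed.


Lemma small_t (a b : R) : (forall t, 0 < t -> t < 1 -> a <= t * b) -> a <= 0.
Proof.
move=> h; rewrite leNgt; apply/negP => a0.
have h1 := h (1/2) ltac:(lra) ltac:(lra).
have b0 : 0 < b by nra.
pose t := Num.min (1/2) (a / (2 * b)).
have t0 : 0 < a / (2 * b) by apply: divr_gt0; lra.
have tp : 0 < t by rewrite /t lt_min; apply/andP; split => //; lra.
have t1 : t < 1 by rewrite /t gt_min; apply/orP; left; lra.
have := h t tp t1.
have e : a / (2 * b) * b = a / 2.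
  by field; rewrite gt_eqF.
have : t * b <= a / (2 * b) * b.
  by apply: ler_wpM2r; [exact: ltW | rewrite /t ge_min lexx orbT].
rewrite e; lra.
Qed.

Lemma dot_ge (x y : vec) : - (n%:R * (`|x| * `|y|)) <= dot x y.
Proof. by have := abs_dot x y; rewrite ler_norml => /andP[]. Qed.

Lemma dot_len (x y : vec) : dot x y <= n%:R * (`|x| * `|y|).
Proof. by have := abs_dot x y; rewrite ler_norml => /andP[]. Qed.

Lemma is_projE (C : set vec) x p :
  is_proj C x p <-> C p /\ forall q, C q -> sq (x - p) <= sq (x - q).
Proof.
rewrite /is_proj; split=> -[Cp h]; split => // q Cq.
  by rewrite -enorm_le; exact: h.
by rewrite enorm_le; exact: h.
Qed.

Lemma proj_exists (C : set vec) x : C !=set0 -> closed C -> exists p, is_proj C x p.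
Proof.
move=> [c Cc] cC.
pose phi z := (ind C z + (sq (x - z))%:E)%E.
have lphi : lower_semicontinuous phi.
  apply: lsc_add; first exact: lsc_ind.
  move=> z; exists (2 * (n%:R * `|x - z|)) => y.
  have -> : x - y = (x - z) - (y - z) by apply/rowP => j; rewrite !mxE; ring.
  rewrite (sqB (x - z) (y - z)); have := dot_len (x - z) (y - z); have := sq_ge0 (y - z); nra.
have cphi : coercive phi.
  apply: coercive_sq => M; exists (2 * (M + sq x)) => z hz.
  rewrite /phi; apply: le_trans (_ : (sq (x - z))%:E <= _)%E; last first.
    by rewrite leeDr // ind_ge0.
  rewrite lee_fin; have := sqD_le (z - x) x.
  have -> : z - x + x = z by apply/rowP => j; rewrite !mxE; ring.
  rewrite (_ : sq (x - z) = sq (z - x)); last by rewrite -sqN opprB.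
  lra.
have [p hp] := exists_min lphi cphi.
exists p; apply/is_projE.
have Cp : C p.
  case: (pselect (C p)) => // nCp; have := hp c; rewrite /phi /ind.
  case: (pselect (C p)) => // H1; case: (pselect (C c)) => // H2.
split => // q Cq; have := hp q; rewrite /phi /ind.
case: (pselect (C p)) => // H1; case: (pselect (C q)) => // H2.
by rewrite !add0e lee_fin.
Qed.

Lemma proj_spec (C : set vec) x : C !=set0 -> closed C -> is_proj C x (proj C x).
Proof. by move=> C0 cC; apply: xgetPex; exact: proj_exists. Qed.

Lemma proj_var (C : set vec) x p : convex_set_Rn C -> is_proj C x p ->
  forall q, C q -> dot (x - p) (q - p) <= 0.
Proof.
move=> cvC /is_projE [Cp hp] q Cq.
apply: (small_t (b := sq (q - p))) => t t0 t1.
have Cqt : C (t *: q + (1 - t) *: p) by apply: cvC => //; lra.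
have := hp _ Cqt.
have -> : x - (t *: q + (1 - t) *: p) = (x - p) - t *: (q - p).
  by apply/rowP => j; rewrite !mxE; ring.
rewrite (sqB (x - p) (t *: (q - p))) dotZr sqZ => h.
have := sq_ge0 (q - p); rewrite expr2 in h; nra.
Qed.

Definition convC (C : set vec) := C !=set0 /\ closed C /\ convex_set_Rn C.

Lemma dist_grad (C : set vec) x z : convC C ->
  sq (x - proj C x) + 2 * dot (x - proj C x) (z - x) <= sq (z - proj C z).
Proof.
move=> [C0 [cC cvC]].
set px := proj C x; set pz := proj C z.
have hv := proj_var cvC (proj_spec x C0 cC) (proj_spec z C0 cC).1.
rewrite -/px -/pz in hv.
have -> : z - pz = (x - px) + ((z - x) - (pz - px)) by apply/rowP => j; rewrite !mxE; ring.
rewrite (sqD (x - px) (z - x - (pz - px))) (dotBr (z - x) (pz - px)).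
have := sq_ge0 ((z - x) - (pz - px)); lra.
Qed.

Lemma proj_fne (C : set vec) x z : convC C ->
  sq (proj C x - proj C z) <= dot (x - z) (proj C x - proj C z).
Proof.
move=> [C0 [cC cvC]].
set px := proj C x; set pz := proj C z.
have h1 := proj_var cvC (proj_spec x C0 cC) (proj_spec z C0 cC).1.
have h2 := proj_var cvC (proj_spec z C0 cC) (proj_spec x C0 cC).1.
rewrite -/px -/pz in h1 h2.
have -> : x - z = (x - px) - (z - pz) + (px - pz) by apply/rowP => j; rewrite !mxE; ring.
rewrite (dotDl ((x - px) - (z - pz)) (px - pz)) (dotBl (x - px) (z - pz)).
have e : pz - px = - (px - pz) by apply/rowP => j; rewrite !mxE; ring.
rewrite e dotNr in h1; rewrite /sq; lra.
Qed.

Lemma dist_sq (C : set vec) x : dist x C ^+ 2 = sq (x - proj C x).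
Proof. exact: enorm_sq. Qed.

End Vec.

Lemma arith_psi (R : realFieldType) (rho a dvq dvxs sv s sy w sqy : R) :
  rho * (- dvq) <= rho * (4 * sv + 16^-1 * s) -> 0 <= rho * s ->
  a + rho * (dvq - dvxs) <= w -> rho / 2 * (s / 2 - sy) <= rho / 2 * sqy ->
  (a - rho * dvxs - 4 * rho * sv - rho / 2 * sy) + rho / 8 * s <= w + rho / 2 * sqy.
Proof. by move=> *; lra. Qed.

Lemma arith_M (R : realFieldType) (M c0 r s : R) : 8 * (M - c0) <= r * s -> M <= c0 + r / 8 * s.
Proof. by move=> *; lra. Qed.

Lemma arith_seq (R : realFieldType) (a1 a0 d1 d0 Nn A : R) :
  a1 <= a0 - d0 / 2 -> Nn / 2 * d1 <= Nn / 2 * d0 -> d1 <= d0 ->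
  a0 + Nn / 2 * d0 <= A -> a1 + (Nn + 1) / 2 * d1 <= A.
Proof. by move=> *; lra. Qed.

Lemma arith_hd (R : realFieldType) (a0 e d s k : R) :
  k / 2 * (e / 8) <= k / 2 * d -> 16 * a0 < k * e -> 0 <= s -> s + k / 2 * d <= a0 -> False.
Proof. by move=> *; lra. Qed.

Lemma arith_fin (R : realFieldType) (e s d s1 s2 : R) :
  e <= 2 * s + 2 * s1 -> s1 <= 2 * d + 2 * s2 -> s2 <= s -> s < e / 12 -> d < e / 8 -> False.
Proof. by move=> *; lra. Qed.

Section Main.
Variables (R : realType) (n m : nat) (f : 'rV[R]_n -> \bar R)
  (C : 'I_m -> set 'rV[R]_n) (rho : R).
Local Notation vec := 'rV[R]_n.
Local Notation proj := (@Defs.proj R n).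
Local Notation dot := (@dot R n).
Local Notation sq := (@sq R n).
Hypotheses (m0 : (0 < m)%N) (pf : proper_fun f) (lf : closed_fun f)
  (cf : convex_fun_Rn f) (hC : forall i, convC (C i)) (rho0 : 0 < rho)
  (coer : coercive (h_rho f C rho)).

Definition Y (x : vec) : vec := (m%:R)^-1 *: \sum_(i < m) proj (C i) x.
Definition D (x : vec) : R := \sum_(i < m) sq (x - proj (C i) x).
Definition g (z : vec) : \bar R := ((rho^-1)%:E * f z)%E.
Definition psi (y q : vec) : \bar R := (f q + (rho / 2 * sq (q - y))%:E)%E.
Definition T (x : vec) : vec := prox g (Y x).

Lemma mR0 : (m%:R : R) != 0.
Proof. by rewrite pnatr_eq0 -lt0n. Qed.
Lemma mR_gt0 : 0 < (m%:R : R).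
Proof. by rewrite ltr0n. Qed.

Lemma TE x : pd_map f C rho x = T x.
Proof. by []. Qed.

Lemma hE x : h_rho f C rho x = (f x + (rho / (2 * m%:R) * D x)%:E)%E.
Proof.
rewrite /h_rho /D; congr (_ + (_ * _)%:E)%E.
by apply: eq_bigr => i _; rewrite dist_sq.
Qed.

Lemma fcase z : f z = +oo%E \/ f z = (fine (f z))%:E.
Proof.
have := pf.1 z; case: (f z) => [w| |] //=; by [right | left].
Qed.

Lemma rinv_y : ((rho^-1)%:E * +oo = +oo)%E.
Proof. by rewrite mulry gtr0_sg ?invr_gt0 // mul1e. Qed.

Lemma is_proxE y p : is_prox g y p <-> forall q, (psi y p <= psi y q)%E.
Proof.
have key q : (g q + (2^-1 * enorm (q - y) ^+ 2)%:E)%E = ((rho^-1)%:E * psi y q)%E.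
  rewrite /g /psi muleDr // ?fin_num_adde_defl // enorm_sq -EFinM.
  congr (_ + _%:E)%E; field; rewrite gt_eqF.
  by [].
by [].
rewrite /is_prox; split=> h q; have := h q; rewrite !key.
  by rewrite lee_pmul2l // lte_fin invr_gt0.
by rewrite lee_pmul2l // lte_fin invr_gt0.
Qed.


Lemma sum_xY x : \sum_(i < m) (x - proj (C i) x) = m%:R *: (x - Y x).
Proof.
rewrite /Y scalerBr scalerA mulfV ?mR0 // scale1r sumrB; congr (_ - _).
by rewrite sumr_const card_ord scaler_nat.
Qed.

Lemma D_grad x z : D x + 2 * m%:R * dot (x - Y x) (z - x) <= D z.
Proof.
have h : \sum_(i < m) (sq (x - proj (C i) x) + 2 * dot (x - proj (C i) x) (z - x)) <= D z.
  by apply: ler_sum => i _; exact: dist_grad.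
apply: le_trans h; rewrite big_split /= -mulr_sumr -dot_suml sum_xY dotZl /D.
by rewrite mulrA.
Qed.

Lemma D_upper x d t : D (x + t *: d) <= D x + 2 * t * m%:R * dot (x - Y x) d + t ^+ 2 * m%:R * sq d.
Proof.
have h : D (x + t *: d) <= \sum_(i < m) (sq (x - proj (C i) x) + 2 * t * dot (x - proj (C i) x) d + t ^+ 2 * sq d).
  apply: ler_sum => i _.
  have [C0 [cC cvC]] := hC i.
  have /is_projE [_ hp] := proj_spec (x + t *: d) C0 cC.
  apply: le_trans (hp _ (proj_spec x C0 cC).1) _.
  have -> : x + t *: d - proj (C i) x = (x - proj (C i) x) + t *: d.
    by apply/rowP => j; rewrite !mxE; ring.
  by rewrite sqD dotZr sqZ mulrA.
apply: le_trans h _; rewrite !big_split /= -!mulr_sumr -dot_suml sum_xY dotZl.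
rewrite sumr_const card_ord -mulr_natr /D; rewrite le_eqVlt; apply/orP; left; apply/eqP; ring.
Qed.

Lemma Y_fne x z : sq (Y x - Y z) <= dot (x - z) (Y x - Y z).
Proof.
set w := Y x - Y z.
pose u i := proj (C i) x - proj (C i) z.
have ew : w = (m%:R)^-1 *: \sum_(i < m) u i.
  by rewrite /w /Y -scalerBr -sumrB.
have h1 : m%:R * sq w = \sum_(i < m) dot (u i) w.
  rewrite -dot_suml {1}/sq {1}ew dotZl mulrA mulfV ?mR0 // mul1r.
  by [].
have h2 : 2 * \sum_(i < m) dot (u i) w <= \sum_(i < m) sq (u i) + m%:R * sq w.
  have h2' : \sum_(i < m) 2 * dot (u i) w <= \sum_(i < m) (sq (u i) + sq w).
    by apply: ler_sum => i _; exact: dot_le.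
  have e1 : \sum_(i < m) 2 * dot (u i) w = 2 * \sum_(i < m) dot (u i) w by rewrite mulr_sumr.
  have e2 : \sum_(i < m) (sq (u i) + sq w) = \sum_(i < m) sq (u i) + m%:R * sq w.
    by rewrite big_split /= sumr_const card_ord mulr_natl.
  by rewrite -e1 -e2.
have h3 : \sum_(i < m) sq (u i) <= \sum_(i < m) dot (x - z) (u i).
  by apply: ler_sum => i _; exact: proj_fne.
have h4 : dot (x - z) w = (m%:R)^-1 * \sum_(i < m) dot (x - z) (u i).
  rewrite {1}ew dotZr; congr (_ * _).
  by rewrite dotC dot_suml; apply: eq_bigr => i _; rewrite dotC.
have hm := mR_gt0.
have hmi : 0 < (m%:R : R)^-1 by rewrite invr_gt0.
have e1 : (m%:R : R)^-1 * m%:R = 1 by rewrite mulVf ?mR0.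
rewrite h4.
have : sq w = (m%:R)^-1 * \sum_(i < m) dot (u i) w.
  by rewrite -h1 mulrA e1 mul1r.
move=> ->; apply: ler_wpM2l; first exact: ltW.
lra.
Qed.


Lemma fin_not_y z : f z != +oo%E -> f z = (fine (f z))%:E.
Proof. by case: (fcase z) => [->|]. Qed.

Lemma psi_sub y p : (forall q, (psi y p <= psi y q)%E) ->
  f p = (fine (f p))%:E /\
  forall z, (((fine (f p)) + rho * dot (y - p) (z - p))%:E <= f z)%E.
Proof.
move=> h.
have [x0 fx0] := pf.2.
have fpE : f p = (fine (f p))%:E.
  case: (fcase p) => // fpy; exfalso.
  have := h x0; rewrite /psi fpy addye // -(fineK fx0) -EFinD leye_eq.
  by [].
split => // z.
case: (fcase z) => [->|fzE]; first exact: leey.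
set fp := fine (f p) in fpE *; set w := fine (f z) in fzE *.
rewrite fzE lee_fin.
suff : fp + rho * dot (y - p) (z - p) - w <= 0 by lra.
apply: (small_t (b := rho / 2 * sq (z - p))) => t t0 t1.
pose zt := t *: z + (1 - t) *: p.
have hconv : (f zt <= (t * w + (1 - t) * fp)%:E)%E.
  by have := cf z p t0 t1; rewrite fzE fpE -!EFinM -EFinD.
have fztE : f zt = (fine (f zt))%:E.
  by case: (fcase zt) => // fy; move: hconv; rewrite fy leye_eq.
set fzt := fine (f zt) in fztE.
have hz1 : fzt <= t * w + (1 - t) * fp by move: hconv; rewrite fztE lee_fin.
have := h zt; rewrite /psi fpE fztE -!EFinD lee_fin.
have -> : zt - y = (p - y) + t *: (z - p) by apply/rowP => j; rewrite !mxE; ring.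
rewrite (sqD (p - y) (t *: (z - p))) dotZr sqZ.
have -> : dot (y - p) (z - p) = - dot (p - y) (z - p) by rewrite -dotNl opprB.
move=> h2.
have h3 : t * (fp - rho * dot (p - y) (z - p) - w) <= t * (t * (rho / 2 * sq (z - p))).
  rewrite expr2 in h2; lra.
by rewrite ler_pM2l // in h3; rewrite mulrN.
Qed.

Lemma psi_fne y y' p p' : (forall q, (psi y p <= psi y q)%E) ->
  (forall q, (psi y' p' <= psi y' q)%E) -> sq (p - p') <= dot (y - y') (p - p').
Proof.
move=> /psi_sub [fpE hp] /psi_sub [fpE' hp'].
have := hp p'; rewrite fpE' lee_fin => h1.
have := hp' p; rewrite fpE lee_fin => h2.
have e : p' - p = - (p - p') by rewrite opprB.
rewrite e dotNr in h1.
have : rho * (dot (y - y') (p - p') - sq (p - p')) >= 0.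
  move: h1 h2; rewrite /sq !dotBl; lra.
by rewrite pmulr_rge0 // subr_ge0.
Qed.

Lemma psi_uniq y p p' : (forall q, (psi y p <= psi y q)%E) ->
  (forall q, (psi y p' <= psi y q)%E) -> p = p'.
Proof.
move=> h h'; have := psi_fne h h'; rewrite subrr dot0l => hs.
apply/eqP; rewrite -subr_eq0; apply/eqP; apply: sq_eq0.
by apply/eqP; rewrite eq_le hs sq_ge0.
Qed.


Let c := rho / (2 * m%:R).
Lemma c_gt0 : 0 < c.
Proof. by rewrite /c divr_gt0 // mulr_gt0 // mR_gt0. Qed.
Lemma c_id d : c * (2 * m%:R * d) = rho * d.
Proof. by rewrite /c; field; rewrite mR0. Qed.
Lemma c_id2 d : c * (m%:R * d) = rho / 2 * d.
Proof. by rewrite /c; field; rewrite mR0. Qed.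

Lemma c_id3 t d : c * (2 * t * m%:R * d) = rho * t * d.
Proof. by rewrite /c; field; rewrite mR0. Qed.
Lemma c_id4 t d : c * (t ^+ 2 * m%:R * d) = rho / 2 * t ^+ 2 * d.
Proof. by rewrite /c; field; rewrite mR0. Qed.

Lemma lsc_h : lower_semicontinuous (h_rho f C rho).
Proof.
have -> : h_rho f C rho = fun x => (f x + (c * D x)%:E)%E.
  by apply: funext => x; rewrite hE.
apply: lsc_add lf _ => x; exists (rho * (n%:R * `|x - Y x|)) => y.
have h := D_grad x y.
have h2 := dot_ge (x - Y x) (y - x).
have := ler_wpM2l (ltW c_gt0) h.
rewrite mulrDr c_id => h3.
have : rho * (- (n%:R * (`|x - Y x| * `|y - x|))) <= rho * dot (x - Y x) (y - x).
  by rewrite ler_pM2l.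
lra.
Qed.

Lemma min_h : exists xs, is_minimizer (h_rho f C rho) xs.
Proof. exact: exists_min lsc_h coer. Qed.

Lemma min_sub xs : is_minimizer (h_rho f C rho) xs ->
  f xs = (fine (f xs))%:E /\
  forall z, (((fine (f xs)) + rho * dot (Y xs - xs) (z - xs))%:E <= f z)%E.
Proof.
move=> h.
have [x0 fx0] := pf.2.
have fxE : f xs = (fine (f xs))%:E.
  case: (fcase xs) => // fpy; exfalso.
  have := h x0; rewrite !hE fpy addye // -(fineK fx0) -EFinD leye_eq.
  by [].
split => // z.
case: (fcase z) => [->|fzE]; first exact: leey.
set fp := fine (f xs) in fxE *; set w := fine (f z) in fzE *.
rewrite fzE lee_fin.
suff : fp + rho * dot (Y xs - xs) (z - xs) - w <= 0 by lra.
apply: (small_t (b := rho / 2 * sq (z - xs))) => t t0 t1.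
pose zt := xs + t *: (z - xs).
have hconv : (f zt <= (t * w + (1 - t) * fp)%:E)%E.
  have -> : zt = t *: z + (1 - t) *: xs by apply/rowP => j; rewrite !mxE; ring.
  by have := cf z xs t0 t1; rewrite fzE fxE -!EFinM -EFinD.
have fztE : f zt = (fine (f zt))%:E.
  by case: (fcase zt) => // fy; move: hconv; rewrite fy leye_eq.
set fzt := fine (f zt) in fztE.
have hz1 : fzt <= t * w + (1 - t) * fp by move: hconv; rewrite fztE lee_fin.
have := h zt; rewrite !hE fxE fztE -!EFinD lee_fin => h2.
have hD := ler_wpM2l (ltW c_gt0) (D_upper xs (z - xs) t).
rewrite !mulrDr c_id3 c_id4 in hD.
have -> : dot (Y xs - xs) (z - xs) = - dot (xs - Y xs) (z - xs) by rewrite -dotNl opprB.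
have h3 : t * (fp - rho * dot (xs - Y xs) (z - xs) - w) <= t * (t * (rho / 2 * sq (z - xs))).
  rewrite -/c /zt in h2; rewrite expr2 in hD; lra.
by rewrite ler_pM2l // in h3; rewrite mulrN.
Qed.


Lemma psi_exists y : exists p, forall q, (psi y p <= psi y q)%E.
Proof.
have [xs hxs] := min_h.
have [fxE hsub] := min_sub hxs.
set a := fine (f xs) in fxE hsub.
set v := Y xs - xs in hsub.
apply: exists_min.
  apply: lsc_add lf _ => q; exists (rho * (n%:R * `|q - y|)) => q'.
  have -> : q' - y = (q - y) + (q' - q) by apply/rowP => j; rewrite !mxE; ring.
  rewrite (sqD (q - y) (q' - q)).
  have h1 := dot_ge (q - y) (q' - q).
  have h2 := sq_ge0 (q' - q).
  have : rho / 2 * (2 * (n%:R * (`|q - y| * `|q' - q|)) + 2 * dot (q - y) (q' - q) + sq (q' - q)) >= 0.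
    by apply: mulr_ge0; [rewrite divr_ge0 ?(ltW rho0) | lra].
  lra.
pose c0 := a - rho * dot v xs - 4 * rho * sq v - rho / 2 * sq y.
have lb q : ((c0 + rho / 8 * sq q)%:E <= psi y q)%E.
  rewrite /psi; case: (fcase q) => [->|fqE]; first by rewrite addye // leey.
  have := hsub q; rewrite fqE lee_fin => hq.
  rewrite -EFinD lee_fin.
  have e1 : dot (2 *: v) (4^-1 *: q) = 2^-1 * dot v q.
    by rewrite dotZl dotZr; field.
  have h1 := dot_le' (2 *: v) (4^-1 *: q).
  rewrite e1 !sqZ in h1.
  have h2 := sqD_le (q - y) y.
  have e2 : q - y + y = q by apply/rowP => j; rewrite !mxE; ring.
  rewrite e2 in h2.
  have h3 := sq_ge0 q.
  rewrite dotBr in hq.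
  have h4 : rho * (- dot v q) <= rho * (4 * sq v + 16^-1 * sq q).
    rewrite ler_pM2l //; move: h1; rewrite !expr2; lra.
  have h5 : rho / 2 * (sq q / 2 - sq y) <= rho / 2 * sq (q - y).
    rewrite ler_pM2l ?divr_gt0 //; lra.
  have h6 : 0 <= rho * sq q by rewrite mulr_ge0 // ltW.
  exact: (arith_psi h4 h6 hq h5).
apply: coercive_sq => M; exists (8 * (M - c0) / rho) => q hq.
apply: le_trans (lb q); rewrite lee_fin.
have : rho * (8 * (M - c0) / rho) <= rho * sq q by rewrite ler_pM2l.
have -> : rho * (8 * (M - c0) / rho) = 8 * (M - c0).
  by rewrite mulrCA mulfV ?gt_eqF // mulr1.
exact: arith_M.
Qed.

Lemma T_spec x q : (psi (Y x) (T x) <= psi (Y x) q)%E.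
Proof.
have : is_prox g (Y x) (prox g (Y x)).
  apply: xgetPex; have [p hp] := psi_exists (Y x); exists p; exact/is_proxE.
by move/is_proxE; apply.
Qed.

Lemma fixed_min x : T x = x -> is_minimizer (h_rho f C rho) x.
Proof.
move=> Tx.
have hx : forall q, (psi (Y x) x <= psi (Y x) q)%E by move=> q; have := T_spec x q; rewrite Tx.
have [fxE hsub] := psi_sub hx.
move=> z; rewrite !hE.
case: (fcase z) => [->|fzE]; first by rewrite addye // leey.
rewrite fxE fzE -!EFinD lee_fin.
have := hsub z; rewrite fzE lee_fin => h1.
have h2 := ler_wpM2l (ltW c_gt0) (D_grad x z).
rewrite mulrDr c_id in h2.
have e : dot (Y x - x) (z - x) = - dot (x - Y x) (z - x) by rewrite -dotNl opprB.
rewrite e in h1.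
rewrite -/c; lra.
Qed.

Lemma min_fixed x : is_minimizer (h_rho f C rho) x -> T x = x.
Proof.
move=> hm; have [fxE hsub] := min_sub hm.
apply: (@psi_uniq (Y x)) => [|q]; first exact: T_spec.
rewrite /psi; case: (fcase q) => [->|fqE]; first by rewrite addye // leey.
have := hsub q; rewrite fqE lee_fin => h1.
rewrite fxE fqE -!EFinD lee_fin.
have -> : q - Y x = (q - x) + (x - Y x) by apply/rowP => j; rewrite !mxE; ring.
rewrite (sqD (q - x) (x - Y x)).
have e1 : dot (Y x - x) (q - x) = - dot (q - x) (x - Y x) by rewrite dotC -dotNr opprB.
rewrite e1 in h1.
have h2 : 0 <= rho / 2 * sq (q - x).
  by apply: mulr_ge0; [apply: divr_ge0 => //; exact: ltW | exact: sq_ge0].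
lra.
Qed.


Lemma prox_spec y q : (psi y (prox g y) <= psi y q)%E.
Proof.
have : is_prox g y (prox g y).
  apply: xgetPex; have [p hp] := psi_exists y; exists p; exact/is_proxE.
by move/is_proxE; apply.
Qed.

Lemma Q_fne y y' : sq (prox g y - prox g y') <= dot (y - y') (prox g y - prox g y').
Proof. exact: psi_fne (prox_spec y) (prox_spec y'). Qed.

Lemma fne_sq (d e : vec) : sq e <= dot d e -> sq (d - e) <= sq d - sq e.
Proof. by move=> h; rewrite sqB; lra. Qed.

Lemma fne_le (d e : vec) : sq e <= dot d e -> sq e <= sq d.
Proof. by move=> /fne_sq h; have := sq_ge0 (d - e); lra. Qed.

Lemma T_nonexp x z : sq (T x - T z) <= sq (x - z).
Proof.
apply: le_trans (fne_le (Q_fne (Y x) (Y z))) _.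
exact: fne_le (Y_fne x z).
Qed.

Lemma T_fix_ineq z x : T z = z -> sq (T x - z) <= sq (x - z) - sq (x - T x) / 2.
Proof.
move=> Tz.
have h1 := fne_sq (Q_fne (Y x) (Y z)).
have h2 := fne_sq (Y_fne x z).
rewrite -/(T x) -/(T z) Tz in h1.
set u1 := x - z - (Y x - Y z) in h2.
set u2 := Y x - Y z - (T x - z) in h1.
have e : x - T x = u1 + u2 by rewrite /u1 /u2; apply/rowP => j; rewrite !mxE; ring.
have h3 := sqD_le u1 u2; rewrite -e in h3.
lra.
Qed.


Definition xk (x0 : vec) k := iter k T x0.

Lemma xkS x0 k : xk x0 k.+1 = T (xk x0 k).
Proof. by rewrite /xk iterS. Qed.

Lemma sqC (a b : vec) : sq (a - b) = sq (b - a).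
Proof. by rewrite -sqN opprB. Qed.

Lemma seq_mono z x0 : T z = z -> forall k, sq (xk x0 k.+1 - z) <= sq (xk x0 k - z).
Proof.
move=> Tz k; rewrite xkS; have := T_fix_ineq (xk x0 k) Tz.
have := sq_ge0 (xk x0 k - T (xk x0 k)); lra.
Qed.

Lemma seq_mono' z x0 : T z = z -> forall k j, (k <= j)%N -> sq (xk x0 j - z) <= sq (xk x0 k - z).
Proof.
move=> Tz k; elim=> [|j IH]; first by rewrite leqn0 => /eqP ->.
rewrite leq_eqVlt => /orP[/eqP ->//|hk].
exact: le_trans (seq_mono x0 Tz j) (IH hk).
Qed.

Lemma seq_bound z x0 : T z = z -> forall N : nat,
  sq (xk x0 N - z) + N%:R / 2 * sq (xk x0 N - xk x0 N.+1) <= sq (x0 - z).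
Proof.
move=> Tz; elim=> [|N IH]; first by rewrite /xk /= mul0r mul0r addr0.
have h1 := T_fix_ineq (xk x0 N) Tz; rewrite -xkS in h1.
have h2 := T_nonexp (xk x0 N) (xk x0 N.+1); rewrite -!xkS in h2.
have h3 : N%:R / 2 * sq (xk x0 N.+1 - xk x0 N.+2) <= N%:R / 2 * sq (xk x0 N - xk x0 N.+1).
  by rewrite ler_wpM2l // divr_ge0.
rewrite (_ : N.+1%:R = N%:R + 1 :> R); last by rewrite -addn1 natrD.
exact: arith_seq h1 h3 h2 IH.
Qed.

Lemma cball_compact r : compact (closed_ball_ (fun x : vec => `|x|) 0 r).
Proof.
apply: bounded_closed_compact; last exact: closed_closed_ball_.
exists r; split; first exact: num_real.
move=> M' hM' z; rewrite /closed_ball_ /= sub0r normrN => hz.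
exact: le_trans hz (ltW hM').
Qed.

Lemma nbhs_sq (p : vec) e : 0 < e -> nbhs p [set y | sq (p - y) < e].
Proof.
move=> e0.
have n1 : 0 < (n%:R : R) + 1 by rewrite ltr_wpDl.
have d0 : 0 < Num.min 1 (e / (n%:R + 1)).
  by rewrite lt_min ltr01 /= divr_gt0.
apply: (nbhs_norm_lt d0) => y; rewrite lt_min => /andP[t1 t2] /=.
rewrite -normrN opprB in t1 t2.
set t := `|p - y| in t1 t2.
have t0 : 0 <= t := normr_ge0 _.
have h1 := sq_le_norm (p - y); rewrite -/t in h1.
have h2 : n%:R * t ^+ 2 <= n%:R * t.
  rewrite ler_wpM2l // expr2; have := ler_wpM2l t0 (ltW t1); by rewrite mulr1.
have h3 : (n%:R + 1) * t < e by rewrite mulrC -ltr_pdivlMr.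
have h4 : 0 <= (n%:R : R) := ler0n _ _.
nra.
Qed.


Lemma conv x0 : exists p, T p = p /\ (xk x0 @ \oo --> p).
Proof.
have [z hz] := min_h; have Tz := min_fixed hz.
set a0 := sq (x0 - z).
have a0_ge : 0 <= a0 := sq_ge0 _.
have bnd k : `|xk x0 k| <= `|z| + (1 + a0).
  have h1 := seq_mono' x0 Tz (leq0n k).
  have h2 := normsq_le (xk x0 k - z).
  set t := `|xk x0 k - z| in h2.
  have t0 : 0 <= t := normr_ge0 _.
  have ht : t <= 1 + a0.
    have : 0 <= (t - 1) * (t - 1) by rewrite -expr2 sqr_ge0.
    rewrite /a0 -/(xk x0 0); move: h1 h2; rewrite expr2; lra.
  have e : xk x0 k = z + (xk x0 k - z) by rewrite addrC subrK.
  rewrite e; apply: le_trans (ler_normD _ _) _.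
  by rewrite lerD2l.
pose K := closed_ball_ (fun x : vec => `|x|) 0 (`|z| + (1 + a0)).
have FF : ProperFilter (xk x0 @ \oo) by exact: fmap_proper_filter.
have FK : (xk x0 @ \oo) K.
  by exists 0%N => // k _ /=; rewrite /K /closed_ball_ /= sub0r normrN; exact: bnd.
have [p [Kp clp]] := cball_compact FF FK.
have Tp : T p = p.
  case: (eqVneq (sq (p - T p)) 0) => [/sq_eq0 /eqP|hne].
    by rewrite subr_eq0 => /eqP.
  have e0 : 0 < sq (p - T p) by rewrite lt_neqAle eq_sym hne sq_ge0.
  set e := sq (p - T p) in e0 hne.
  have [N hN] : exists N : nat, 16 * a0 / e < N%:R.
    by exists (Num.trunc (16 * a0 / e)).+1; exact: truncnS_gt.
  pose A := [set y | exists2 k, (N <= k)%N & y = xk x0 k].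
  have FA : (xk x0 @ \oo) A by exists N => // k /= hk; exists k.
  have e12 : 0 < e / 12 by rewrite divr_gt0.
  have [y [[k hk ->] hy]] := clp A _ FA (nbhs_sq p e12).
  rewrite /= in hy.
  have hb := seq_bound x0 Tz k.
  have hd : sq (xk x0 k - xk x0 k.+1) < e / 8.
    rewrite ltNge; apply/negP => hd.
    have h1 : k%:R / 2 * (e / 8) <= k%:R / 2 * sq (xk x0 k - xk x0 k.+1).
      by rewrite ler_wpM2l // divr_ge0.
    have hk' : (N%:R : R) <= k%:R by rewrite ler_nat.
    have h2 : 16 * a0 < k%:R * e.
      have h4 : 16 * a0 < N%:R * e by move: hN; rewrite (ltr_pdivrMr _ _ e0).
      apply: lt_le_trans h4 _; by rewrite (ler_pM2r e0).
    have h3 := sq_ge0 (xk x0 k - z).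
    have hb' : sq (xk x0 k - z) + k%:R / 2 * sq (xk x0 k - xk x0 k.+1) <= a0 := hb.
    exact: arith_hd h1 h2 h3 hb'.
  have h1 := sqD_le (p - xk x0 k) (xk x0 k - T p).
  have h2 := sqD_le (xk x0 k - T (xk x0 k)) (T (xk x0 k) - T p).
  have h3 := T_nonexp (xk x0 k) p.
  have e1 : p - xk x0 k + (xk x0 k - T p) = p - T p by rewrite addrA subrK.
  have e2 : xk x0 k - T (xk x0 k) + (T (xk x0 k) - T p) = xk x0 k - T p by rewrite addrA subrK.
  rewrite e1 -/e in h1; rewrite e2 in h2; rewrite -xkS in h2 h3.
  rewrite (sqC (xk x0 k) p) in h3.
  exfalso; exact: arith_fin h1 h2 h3 hy hd.
exists p; split => //.
apply/cvgrPdist_lt => eps eps0.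
pose A := [set y | exists k, y = xk x0 k].
have FA : (xk x0 @ \oo) A by exists 0%N => // k _; exists k.
have e2 : 0 < eps ^+ 2 by rewrite exprn_gt0.
have [y [[k ->] hy]] := clp A _ FA (nbhs_sq p e2).
rewrite /= in hy.
exists k => // j /= hj.
have h1 := seq_mono' x0 Tp hj.
have h2 := normsq_le (p - xk x0 j).
rewrite -(@ltr_pXn2r _ 2) // ?nnegrE ?normr_ge0 ?(ltW eps0) //.
apply: le_lt_trans h2 _; rewrite sqC; apply: le_lt_trans h1 _.
by rewrite sqC.
Qed.

Lemma main_sec :
  (forall x, pd_map f C rho x = x <-> is_minimizer (h_rho f C rho) x) /\
  (exists x, pd_map f C rho x = x) /\
  (forall x0, exists xstar, is_minimizer (h_rho f C rho) xstar /\
     (fun k : nat => iter k (pd_map f C rho) x0) @ \oo --> xstar).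
Proof.
split; first by move=> x; rewrite TE; split; [exact: fixed_min | exact: min_fixed].
split; first by have [x hx] := min_h; exists x; rewrite TE; exact: min_fixed.
move=> x0; have [p [Tp cv]] := conv x0.
by exists p; split => //; exact: fixed_min.
Qed.

End Main.

Unset Implicit Arguments.

Theorem mainTheorem1 (R : realType) (n m : nat) (f : 'rV[R]_n -> \bar R)
  (C : 'I_m -> set 'rV[R]_n) (rho : R) :
  (0 < m)%N ->
  proper_fun f -> closed_fun f -> convex_fun_Rn f ->
  (forall i, C i !=set0 /\ closed (C i) /\ convex_set_Rn (C i)) ->
  0 < rho ->
  coercive (h_rho f C rho) ->
  (forall x : 'rV[R]_n, pd_map f C rho x = x <-> is_minimizer (h_rho f C rho) x) /\
  (exists x : 'rV[R]_n, pd_map f C rho x = x) /\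
  (forall x0 : 'rV[R]_n, exists xstar : 'rV[R]_n,
     is_minimizer (h_rho f C rho) xstar /\
     (fun k : nat => iter k (pd_map f C rho) x0) @ \oo --> xstar).
Proof.
move=> m0 pf lf cf hC rho0 coer.
by apply: main_sec.
Qed.
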